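(* Under the standing assumptions, suppose that $V_R(V_R(R^{\beta_H}))=R^{\beta_H}$ for every wide subgroupoid $H$ of $\mathcal G$. Consider, on the set of wide subgroupoids of $\mathcal G$, the Galois map $\theta(H)=R^{\beta_H}$ and the map $\gamma(H)=\bigoplus_{h\in H}J_h$. Then $\theta$ is injective if and only if $\gamma$ is injective.
   Context: All rings and algebras are associative and unital. A groupoid is a nonempty set $\mathcal G$ with a partially defined associative multiplication in which every $g$ has an inverse $g^{-1}$, a left identity $r(g)=gg^{-1}$ and a right identity $d(g)=g^{-1}g$; $gh$ is defined iff $d(g)=r(h)$; $\mathcal G_0$ is the set of identities. A subgroupoid is a nonempty subset closed under inverses and defined products; it is wide if it contains $\mathcal G_0$. Standing assumptions: $K$ commutative ring, $R$ a $K$-algebra, $\mathcal G$ a finite groupoid, $\beta=(\{E_g\},\{\beta_g\})$ a unital action of $\mathcal G$ on $R$: $E_g=E_{r(g)}$ is an ideal of $R$, unital with identity $1_g$ (so $1_{g^{-1}}=1_{d(g)}$), $\beta_g:E_{g^{-1}}\to E_g$ a $K$-algebra isomorphism, $\beta_e=\mathrm{id}_{E_e}$ for $e\in\mathcal G_0$, $\beta_g\beta_h(x)=\beta_{gh}(x)$ whenever $d(g)=r(h)$, $x\in E_{h^{-1}}$; $R=\bigoplus_{e\in\mathcal G_0}E_e$; and $R$ is a $\beta$-Galois extension of $R^\beta$: there exist $x_i,y_i\in R$ ($1\le i\le m$) with $\sum_i x_i\beta_g(y_i1_{g^{-1}})=1_g$ if $g\in\mathcal G_0$ and $=0$ otherwise.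 For a subgroupoid $H$, $R^{\beta_H}=\{r\in R:\beta_h(r1_{h^{-1}})=r1_h\ \forall h\in H\}$. $V_R(S)=\{r\in R: rs=sr\ \forall s\in S\}$. For $g\in\mathcal G$, $J_g=\{r\in E_g: r\beta_g(x1_{g^{-1}})=xr\ \forall x\in R\}$. *)

(* Defs.v *)
From mathcomp Require Import all_boot all_order all_algebra.
Set Implicit Arguments. Unset Strict Implicit. Unset Printing Implicit Defensive.
Import GRing.Theory.
Local Open Scope ring_scope.

(* A finite groupoid on the carrier T: a multiplication [gmul] (only meaningful
   on composable pairs, i.e. when d g = r h) and an inverse [ginv];
   r g = g g^-1 and d g = g^-1 g. *)
Record groupoid (T : finType) := Groupoid {
  gmul : T -> T -> T;
  ginv : T -> T
}.

Section GroupoidOps.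
Variables (T : finType) (G : groupoid T).
Definition gr (g : T) : T := gmul G g (ginv G g).
Definition gd (g : T) : T := gmul G (ginv G g) g.
Definition gid : {set T} := [set e | gr e == e].
End GroupoidOps.

Definition is_groupoid (T : finType) (G : groupoid T) : Prop :=
  [/\ (forall g h k, gd G g = gr G h -> gd G h = gr G k ->
          gmul G (gmul G g h) k = gmul G g (gmul G h k)),
      (forall g h, gd G g = gr G h ->
          gr G (gmul G g h) = gr G g /\ gd G (gmul G g h) = gd G h),
      (forall g, gmul G (gr G g) g = g /\ gmul G g (gd G g) = g),
      (forall g, gr G (ginv G g) = gd G g /\ gd G (ginv G g) = gr G g)
    & ((forall g, gr G g \in gid G /\ gd G g \in gid G)
       /\ (forall g, ginv G (ginv G g) = g))].

Definition subgroupoid (T : finType) (G : groupoid T) (H : {set T}) : Prop :=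
  [/\ H != set0,
      (forall h, h \in H -> ginv G h \in H)
    & (forall g h, g \in H -> h \in H -> gd G g = gr G h -> gmul G g h \in H)].

Definition wide (T : finType) (G : groupoid T) (H : {set T}) : Prop :=
  subgroupoid G H /\ gid G \subset H.

(* Data: E g (the ideal E_g, as a predicate on R), one g (its identity 1_g),
   beta g (the isomorphism beta_g : E_{g^-1} -> E_g, as a function on R). *)

Definition is_ideal (R : pzRingType) (I : R -> Prop) : Prop :=
  [/\ I 0, (forall x y, I x -> I y -> I (x + y)), (forall x, I x -> I (- x))
    & (forall a x, I x -> I (a * x) /\ I (x * a))].

Definition is_unital_action (K : comPzRingType) (R : algType K)
  (T : finType) (G : groupoid T) (E : T -> (R -> Prop)) (one : T -> R)
  (beta : T -> R -> R) : Prop :=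
   (forall g x, E g x <-> E (gr G g) x) /\
   (forall g, is_ideal (E g)) /\
   (forall g, E g (one g) /\ (forall x, E g x -> one g * x = x /\ x * one g = x)) /\
   (forall g,
      (forall x, E (ginv G g) x -> E g (beta g x)) /\
          (forall x y, E (ginv G g) x -> E (ginv G g) y -> beta g x = beta g y -> x = y) /\
          (forall y, E g y -> exists2 x, E (ginv G g) x & beta g x = y) /\
          (forall x y, E (ginv G g) x -> E (ginv G g) y -> beta g (x + y) = beta g x + beta g y) /\
          (forall x y, E (ginv G g) x -> E (ginv G g) y -> beta g (x * y) = beta g x * beta g y)
        /\ (forall (k : K) x, E (ginv G g) x -> beta g (k *: x) = k *: beta g x)) /\
   (forall e, e \in gid G -> forall x, E e x -> beta e x = x) /\
   (forall g h, gd G g = gr G h -> forall x, E (ginv G h) x ->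
       beta g (beta h x) = beta (gmul G g h) x) /\
   ((forall x : R, exists f : T -> R,
        (forall e, e \in gid G -> E e (f e)) /\ x = \sum_(e in gid G) f e) /\
    (forall f : T -> R, (forall e, e \in gid G -> E e (f e)) ->
        \sum_(e in gid G) f e = 0 -> forall e, e \in gid G -> f e = 0)).

Definition is_galois (K : comPzRingType) (R : algType K)
  (T : finType) (G : groupoid T) (one : T -> R) (beta : T -> R -> R) : Prop :=
  exists m : nat, exists x y : 'I_m -> R, forall g : T,
    \sum_(i < m) x i * beta g (y i * one (ginv G g)) =
      (if g \in gid G then one g else 0).

Definition fixed_ring (K : comPzRingType) (R : algType K)
  (T : finType) (G : groupoid T) (one : T -> R) (beta : T -> R -> R)
  (H : {set T}) : (R -> Prop) :=
  fun r => forall h, h \in H -> beta h (r * one (ginv G h)) = r * one h.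

Definition centralizer (R : pzRingType) (S : (R -> Prop)) : (R -> Prop) :=
  fun r => forall s, S s -> r * s = s * r.

Definition Jset (K : comPzRingType) (R : algType K)
  (T : finType) (G : groupoid T) (E : T -> (R -> Prop)) (one : T -> R)
  (beta : T -> R -> R) (g : T) : (R -> Prop) :=
  fun r => E g r /\ forall x, r * beta g (x * one (ginv G g)) = x * r.

(* gamma(H) = (+)_{h in H} J_h, the (internal) sum of the J_h in R *)
Definition gamma_map (K : comPzRingType) (R : algType K)
  (T : finType) (G : groupoid T) (E : T -> (R -> Prop)) (one : T -> R)
  (beta : T -> R -> R) (H : {set T}) : (R -> Prop) :=
  fun r => exists a : T -> R,
     (forall h, h \in H -> Jset G E one beta h (a h)) /\ r = \sum_(h in H) a h.

Definition injective_on_wide (T : finType) (G : groupoid T) (R : Type)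
  (F : {set T} -> R -> Prop) : Prop :=
  forall H1 H2, wide G H1 -> wide G H2 -> (forall x, F H1 x <-> F H2 x) -> H1 = H2.

(* Main.v *)
Require Import Defs.
From mathcomp Require Import all_boot all_order all_algebra.
Set Implicit Arguments. Unset Strict Implicit. Unset Printing Implicit Defensive.
Import GRing.Theory.
Local Open Scope ring_scope.

Section Basic.
Variables (K : comPzRingType) (R : algType K) (T : finType)
  (G : groupoid T) (E : T -> R -> Prop) (one : T -> R) (beta : T -> R -> R).
Hypothesis HG : is_groupoid G.
Hypothesis Hact : is_unital_action G E one beta.

Lemma ginvK g : ginv G (ginv G g) = g. Proof. by case: HG => _ _ _ _ [_ ->]. Qed.
Lemma gr_gid g : gr G g \in gid G. Proof. by case: HG => _ _ _ _ [/(_ g) []]. Qed.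
Lemma gd_gid g : gd G g \in gid G. Proof. by case: HG => _ _ _ _ [/(_ g) []]. Qed.
Lemma gr_inv g : gr G (ginv G g) = gd G g. Proof. by case: HG => _ _ _ /(_ g) []. Qed.
Lemma gd_inv g : gd G (ginv G g) = gr G g. Proof. by case: HG => _ _ _ /(_ g) []. Qed.
Lemma gmulA g h k : gd G g = gr G h -> gd G h = gr G k ->
   gmul G (gmul G g h) k = gmul G g (gmul G h k).
Proof. by case: HG => + _ _ _ _; apply. Qed.
Lemma gmul_r g h : gd G g = gr G h -> gr G (gmul G g h) = gr G g.
Proof. by case: HG => _ + _ _ _ => /(_ g h) H /H []. Qed.
Lemma gmul_d g h : gd G g = gr G h -> gd G (gmul G g h) = gd G h.
Proof. by case: HG => _ + _ _ _ => /(_ g h) H /H []. Qed.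
Lemma gmul_rl g : gmul G (gr G g) g = g. Proof. by case: HG => _ _ /(_ g) [] . Qed.
Lemma gmul_dr g : gmul G g (gd G g) = g. Proof. by case: HG => _ _ /(_ g) [] . Qed.

Lemma gidE e : (e \in gid G) = (gr G e == e). Proof. by rewrite inE. Qed.

Lemma gid_inv_d e : e \in gid G -> ginv G e = gd G e.
Proof.
rewrite gidE => /eqP he.
rewrite -{1}(gmul_rl (ginv G e)) gr_inv {1}/gd gmulA ?gd_inv ?gr_inv //.
by rewrite -/(gr G e) he.
Qed.

Lemma gid_d e : e \in gid G -> gd G e = e.
Proof.
move=> he.
have h1 : gd G e = gd G (gd G e).
  have hd : gd G e = gr G (gd G e).
    by have := gd_gid e; rewrite gidE => /eqP ->.
  by have := gmul_d hd; rewrite gmul_dr.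
by rewrite h1 -(gid_inv_d he) gd_inv; move: he; rewrite gidE => /eqP.
Qed.

Lemma gid_inv e : e \in gid G -> ginv G e = e.
Proof. by move=> he; rewrite gid_inv_d // gid_d. Qed.


Lemma E_r g x : E g x <-> E (gr G g) x.
Proof. by case: Hact => + _; apply. Qed.
Lemma E_ideal g : is_ideal (E g).
Proof. by case: Hact => _ [+ _]; apply. Qed.
Lemma E_one g : E g (one g).
Proof. by case: Hact => _ [_ [/(_ g) [] + _]]. Qed.
Lemma one_l g x : E g x -> one g * x = x.
Proof. by case: Hact => _ [_ [/(_ g) [] _ H _]] /H []. Qed.
Lemma one_r g x : E g x -> x * one g = x.
Proof. by case: Hact => _ [_ [/(_ g) [] _ H _]] /H []. Qed.
Lemma E0 g : E g 0. Proof. by case: (E_ideal g). Qed.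
Lemma E_add g x y : E g x -> E g y -> E g (x + y). Proof. by move=> hx hy; case: (E_ideal g) => _ H _ _; exact: H. Qed.
Lemma E_mulr g a x : E g x -> E g (x * a). Proof. by case: (E_ideal g) => _ _ _ H /(H a) []. Qed.
Lemma E_mull g a x : E g x -> E g (a * x). Proof. by case: (E_ideal g) => _ _ _ H /(H a) []. Qed.

Lemma one_central g a : one g * a = a * one g.
Proof.
have h1 : one g * (a * one g) = a * one g by rewrite one_l //; apply: E_mull; exact: E_one.
have h2 : (one g * a) * one g = one g * a by rewrite one_r //; apply: E_mulr; exact: E_one.
by rewrite -h2 -mulrA h1.
Qed.
Lemma one_idem g : one g * one g = one g. Proof. by rewrite one_l //; exact: E_one. Qed.
Lemma one_gr g : one (gr G g) = one g.
Proof.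
have h1 : E g (one (gr G g)) by apply/(E_r g); exact: E_one.
have h2 : E (gr G g) (one g) by apply/(E_r g); exact: E_one.
by rewrite -(one_r h1) (one_l h2).
Qed.
Lemma one_inv g : one (ginv G g) = one (gd G g).
Proof. by rewrite -one_gr gr_inv. Qed.

Lemma beta_E g x : E (ginv G g) x -> E g (beta g x).
Proof. by case: Hact => _ [_ [_ [/(_ g) [+ _] _]]]; apply. Qed.
Lemma beta_add g x y : E (ginv G g) x -> E (ginv G g) y -> beta g (x + y) = beta g x + beta g y.
Proof. by case: Hact => _ [_ [_ [/(_ g) [_ [_ [_ [+ _]]]] _]]]; apply. Qed.
Lemma beta_mul g x y : E (ginv G g) x -> E (ginv G g) y -> beta g (x * y) = beta g x * beta g y.
Proof. by case: Hact => _ [_ [_ [/(_ g) [_ [_ [_ [_ [+ _]]]]] _]]]; apply. Qed.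
Lemma beta0 g : beta g 0 = 0.
Proof.
have := beta_add (E0 (ginv G g)) (E0 (ginv G g)); rewrite addr0.
by move/(congr1 (fun z => z - beta g 0)); rewrite /= subrr addrK.
Qed.
Lemma beta_id e x : e \in gid G -> E e x -> beta e x = x.
Proof. by move=> he hx; case: Hact => _ [_ [_ [_ [H _]]]]; exact: H. Qed.
Lemma beta_comp g h x : gd G g = gr G h -> E (ginv G h) x ->
   beta g (beta h x) = beta (gmul G g h) x.
Proof. by move=> h1 h2; case: Hact => _ [_ [_ [_ [_ [H _]]]]]; exact: H. Qed.

Lemma E_gid_ortho a b x : a \in gid G -> b \in gid G -> a != b -> E a x -> E b x -> x = 0.
Proof.
move=> ha hb ab hxa hxb.
case: Hact => _ [_ [_ [_ [_ [_ [_ Hu]]]]]].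
pose f t := if t == a then x else if t == b then - x else 0.
have hf : forall e, e \in gid G -> E e (f e).
  move=> e _; rewrite /f; case: eqP => [->//|_]; case: eqP => [->|_]; last exact: E0.
  by case: (E_ideal b) => _ _ H _; apply: H.
have := Hu f hf; rewrite (bigD1 a) //= (bigD1 b) /=; last by rewrite hb eq_sym.
rewrite big1; last by move=> e /andP [/andP [_ /negPf ea] /negPf eb]; rewrite /f ea eb.
rewrite /f eqxx; rewrite eq_sym in ab; rewrite (negPf ab) eqxx addr0 subrr.
by move/(_ erefl a ha); rewrite eqxx.
Qed.

Lemma mul_one_gid a b x : a \in gid G -> b \in gid G -> E a x ->
  x * one b = if a == b then x else 0.
Proof.
move=> ha hb hx; case: eqP => [<-|/eqP ne]; first exact: one_r.
apply: (E_gid_ortho ha hb ne); first exact: E_mulr.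
by apply: E_mull; exact: E_one.
Qed.

Lemma sum_one : \sum_(e in gid G) one e = 1.
Proof.
case: Hact => _ [_ [_ [_ [_ [_ [Hdec _]]]]]].
have [f [hf h1]] := Hdec 1.
have fe : forall e, e \in gid G -> f e = one e.
  move=> e he; rewrite -[RHS]mulr1 h1 mulr_sumr (bigD1 e) //= big1 ?addr0.
    by rewrite one_central one_r //; exact: hf.
  move=> e' /andP [he' ne]; rewrite one_central (mul_one_gid he' he (hf e' he')).
  by rewrite (negPf ne).
by rewrite h1; apply: eq_bigr => e he; rewrite fe.
Qed.

Lemma beta_sum g (I : Type) (r : seq I) (P : pred I) (F : I -> R) :
  (forall i, P i -> E (ginv G g) (F i)) ->
  beta g (\sum_(i <- r | P i) F i) = \sum_(i <- r | P i) beta g (F i).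
Proof.
move=> hF.
pose Kp := fun a b => E (ginv G g) a /\ beta g a = b.
suff : Kp (\sum_(i <- r | P i) F i) (\sum_(i <- r | P i) beta g (F i)) by case.
apply: (big_rec2 Kp); first by split; [exact: E0 | exact: beta0].
move=> i y1 y2 Pi [hy1 <-]; split; first exact: E_add (hF i Pi) hy1.
by apply: beta_add => //; exact: hF.
Qed.

Lemma E_inv_one g x : E (ginv G g) (x * one (ginv G g)).
Proof. apply: E_mull; exact: E_one. Qed.

Lemma betaM1 h a b : beta h (a * one (ginv G h)) * beta h (b * one (ginv G h)) =
   beta h (a * b * one (ginv G h)).
Proof.
rewrite -beta_mul; try exact: E_inv_one; congr (beta h _).
by rewrite mulrA -(mulrA a) one_central mulrA -mulrA one_idem.
Qed.


Lemma E_sum g (I : Type) (r : seq I) (P : pred I) (F : I -> R) :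
  (forall i, P i -> E g (F i)) -> E g (\sum_(i <- r | P i) F i).
Proof.
move=> hF; apply: (big_ind (E g)); [exact: E0 | exact: E_add | exact: hF].
Qed.

Variables (m : nat) (x y : 'I_m -> R).
Hypothesis Hxy : forall g : T,
    \sum_(i < m) x i * beta g (y i * one (ginv G g)) =
      (if g \in gid G then one g else 0).
Variable H : {set T}.
Hypothesis HH : wide G H.

Lemma H_sub : gid G \subset H. Proof. by case: HH. Qed.
Lemma H_inv h : h \in H -> ginv G h \in H. Proof. by case: HH => [[_ + _] _]; apply. Qed.
Lemma H_mul g h : g \in H -> h \in H -> gd G g = gr G h -> gmul G g h \in H.
Proof. by move=> a b c; case: HH => [[_ _ +] _]; apply. Qed.

Definition tr z := \sum_(h in H) beta h (z * one (ginv G h)).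

Lemma sum_gid_H (F : T -> R) :
  \sum_(h in H) (if h \in gid G then F h else 0) = \sum_(h in gid G) F h.
Proof.
rewrite -big_mkcondr; apply: eq_bigl => h /=.
by apply/andP/idP => [[]//|hg]; split => //; exact: (subsetP H_sub).
Qed.

Lemma L1 u : \sum_(i < m) x i * tr (y i * u) = u.
Proof.
rewrite /tr; under eq_bigr => i _ do rewrite mulr_sumr.
rewrite exchange_big /=.
transitivity (\sum_(h in H) (if h \in gid G then one h else 0) * beta h (u * one (ginv G h))).
  apply: eq_bigr => h hH; rewrite -Hxy mulr_suml; apply: eq_bigr => i _.
  by rewrite -[RHS]mulrA betaM1.
transitivity (\sum_(h in H) (if h \in gid G then u * one h else 0)).
  apply: eq_bigr => h _; case: ifP => hg; last by rewrite mul0r.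
  rewrite gid_inv // beta_id //; last by apply: E_mull; exact: E_one.
  by rewrite one_central -mulrA one_idem.
by rewrite sum_gid_H -mulr_sumr sum_one mulr1.
Qed.

Lemma gid_ginv h : (ginv G h \in gid G) = (h \in gid G).
Proof.
apply/idP/idP => hh; last by rewrite gid_inv.
by have := gid_inv hh; rewrite ginvK => ->.
Qed.

Lemma Mlem h : \sum_(j < m) beta h (x j * one (ginv G h)) * y j =
   if h \in gid G then one h else 0.
Proof.
have g := Hxy (ginv G h); rewrite ginvK gid_ginv in g.
have hE : forall i, E (ginv G h) (x i * beta (ginv G h) (y i * one h)).
  move=> i; apply: E_mull; apply: beta_E; rewrite ginvK; apply: E_mull; exact: E_one.
have := congr1 (beta h) g; rewrite beta_sum; last by move=> i _; exact: hE.
move=> g2.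
transitivity (beta h (if h \in gid G then one (ginv G h) else 0)); last first.
  case: ifP => hg; last exact: beta0.
  rewrite gid_inv // beta_id //; exact: E_one.
rewrite -g2; apply: eq_bigr => i _.
have hb : E (ginv G h) (beta (ginv G h) (y i * one h)).
  apply: beta_E; rewrite ginvK; apply: E_mull; exact: E_one.
rewrite -{1}(one_l hb) [in RHS]mulrA [RHS]beta_mul; last by []; last exact: E_inv_one.
rewrite beta_comp; first last.
- by rewrite ginvK; apply: E_mull; exact: E_one.
- by rewrite gr_inv.
rewrite -/(gr G h) (beta_id (gr_gid h)); last first.
  by apply/(E_r h); apply: E_mull; exact: E_one.
rewrite mulrA [RHS]one_r //; apply: E_mulr; apply: beta_E; exact: E_inv_one.
Qed.

Lemma L2 v : \sum_(j < m) tr (v * x j) * y j = v.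
Proof.
rewrite /tr; under eq_bigr => j _ do rewrite mulr_suml.
rewrite exchange_big /=.
transitivity (\sum_(h in H) beta h (v * one (ginv G h)) * (if h \in gid G then one h else 0)).
  apply: eq_bigr => h hH; rewrite -Mlem mulr_sumr; apply: eq_bigr => j _.
  by rewrite [RHS]mulrA betaM1.
transitivity (\sum_(h in H) (if h \in gid G then v * one h else 0)).
  apply: eq_bigr => h _; case: ifP => hg; last by rewrite mulr0.
  rewrite gid_inv // beta_id //; last by apply: E_mull; exact: E_one.
  by rewrite -mulrA one_idem.
by rewrite sum_gid_H -mulr_sumr sum_one mulr1.
Qed.

Lemma trmul z t : t \in gid G ->
  tr z * one t = \sum_(h in H | gr G h == t) beta h (z * one (ginv G h)).
Proof.
move=> ht; rewrite /tr mulr_suml big_mkcondr; apply: eq_bigr => h _.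
rewrite (mul_one_gid (gr_gid h) ht) //.
by apply/(E_r h); apply: beta_E; exact: E_inv_one.
Qed.

Lemma tr_fixed z : fixed_ring G one beta H (tr z).
Proof.
move=> k hk.
rewrite one_inv (trmul _ (gd_gid k)) -one_gr (trmul _ (gr_gid k)).
rewrite beta_sum; last first.
  move=> h /andP [_ /eqP hr]; apply/(E_r (ginv G k)); rewrite gr_inv -hr.
  apply/(E_r h); apply: beta_E; exact: E_inv_one.
transitivity (\sum_(h in H | gr G h == gd G k)
                beta (gmul G k h) (z * one (gd G (gmul G k h)))).
  apply: eq_big => // h /andP [_ /eqP hr].
  rewrite beta_comp //; last exact: E_inv_one.
  by rewrite gmul_d // one_inv.
symmetry.
rewrite (reindex_onto (gmul G k) (gmul G (ginv G k))); last first.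
  move=> g /andP [_ /eqP hg].
  rewrite -gmulA ?gd_inv ?gr_inv //; rewrite -/(gr G k) -hg; exact: gmul_rl.
apply: eq_big => [j|j /andP [/andP [_ /eqP hr] _]]; last by rewrite one_inv.
apply/idP/idP.
  move=> /andP [/andP [hkj /eqP hr] /eqP hj].
  have e1 : gd G (ginv G k) = gr G (gmul G k j) by rewrite gd_inv hr.
  rewrite -hj; apply/andP; split; first exact: H_mul (H_inv hk) hkj e1.
  by rewrite gmul_r // gr_inv.
move=> /andP [hj /eqP hr].
rewrite H_mul ?gmul_r ?eqxx //=.
rewrite -gmulA ?gd_inv //.
by rewrite -/(gd G k) -hr gmul_rl.
Qed.

Lemma gamma_cent r : gamma_map G E one beta H r -> centralizer (fixed_ring G one beta H) r.
Proof.
move=> [a [ha ->]] s hs; rewrite mulr_suml mulr_sumr; apply: eq_bigr => h hH.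
have [hE hJ] := ha h hH; rewrite -(hJ s) (hs h hH).
by rewrite -one_central mulrA one_r.
Qed.

Lemma cent_gamma r : centralizer (fixed_ring G one beta H) r -> gamma_map G E one beta H r.
Proof.
move=> hr.
exists (fun h => \sum_(i < m) x i * r * beta h (y i * one (ginv G h))); split.
  move=> h hH; split.
    apply: E_sum => i _; apply: E_mull; apply: beta_E; exact: E_inv_one.
  move=> z; rewrite mulr_suml [RHS]mulr_sumr.
  under eq_bigr => i _ do rewrite -mulrA betaM1.
  pose F u v := u * r * beta h (v * one (ginv G h)).
  have Fsum : forall u (sv : 'I_m -> R), (forall j, fixed_ring G one beta H (sv j)) ->
      F u (\sum_(j < m) sv j * y j) = \sum_(j < m) F (u * sv j) (y j).
    move=> u sv hs; rewrite /F mulr_suml beta_sum; last by move=> j _; exact: E_inv_one.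
    rewrite mulr_sumr; apply: eq_bigr => j _.
    rewrite -mulrA -betaM1 (hs j h hH) -mulrA (one_l (beta_E (E_inv_one _ _))).
    rewrite !mulrA -(mulrA u r) hr; [by rewrite mulrA | exact: hs].
  transitivity (\sum_(i < m) F (x i) (y i * z)); first by [].
  rewrite (eq_bigr (fun i => \sum_(j < m) F (x i * tr (y i * z * x j)) (y j))); last first.
    by move=> i _; rewrite -{1}[y i * z]L2 Fsum // => j; exact: tr_fixed.
  rewrite exchange_big /=; apply: eq_bigr => j _.
  rewrite /F -!mulr_suml.
  under eq_bigr => i _ do rewrite -mulrA.
  by rewrite L1 !mulrA.
rewrite exchange_big /=.
under eq_bigr => i _ do rewrite -mulr_sumr -/(tr (y i)).
transitivity (\sum_(i < m) x i * tr (y i * 1) * r); last first.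
  by apply: eq_bigr => i _; rewrite mulr1 -!mulrA hr //; exact: tr_fixed.
by rewrite -mulr_suml L1 mul1r.
Qed.
End Basic.

Theorem theorem3p9 (K : comPzRingType) (R : algType K) (T : finType)
  (G : groupoid T) (E : T -> R -> Prop) (one : T -> R) (beta : T -> R -> R)
  (HG : is_groupoid G)
  (Hact : is_unital_action G E one beta)
  (Hgal : is_galois G one beta)
  (Hdc : forall H : {set T}, wide G H ->
     forall x : R, centralizer (centralizer (fixed_ring G one beta H)) x <->
                   fixed_ring G one beta H x) :
  injective_on_wide G (fixed_ring G one beta) <->
  injective_on_wide G (gamma_map G E one beta).
Proof.
case: Hgal => m [x [y Hxy]].
have CG : forall H, wide G H -> forall r,
   centralizer (fixed_ring G one beta H) r <-> gamma_map G E one beta H r.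
  move=> H HH r; split; [exact: cent_gamma | exact: gamma_cent].
split => inj H1 H2 w1 w2 heq; apply: inj => // z.
- split => hz.
  + apply/(Hdc _ w2) => s hs; apply: ((Hdc _ w1 z).2 hz).
    by apply/(CG _ w1); apply/heq; apply/(CG _ w2).
  + apply/(Hdc _ w1) => s hs; apply: ((Hdc _ w2 z).2 hz).
    by apply/(CG _ w2); apply/heq; apply/(CG _ w1).
- split => hz.
  + apply/(CG _ w2) => s hs; apply: ((CG _ w1 z).2 hz); exact/heq.
  + apply/(CG _ w1) => s hs; apply: ((CG _ w2 z).2 hz); exact/heq.
Qed.
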